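(* Let $\pi_1:V_1\to X_1$ and $\pi_2:V_2\to X_2$ be diffeological vector pseudo-bundles, let $(\tilde f,f)$ be a gluing of the former to the latter such that both $\tilde f$ and $f$ are subductions (onto their images), and let $s_i\in C^\infty(X_i,V_i)$ for $i=1,2$. If $s_1$ and $s_2$ are $(f,\tilde f)$-compatible, then $\mathcal{S}_1(s_1)$ and $s_2$ are $(f_\sim,\tilde f_\sim)$-compatible.
   Context: Diffeological spaces, smooth maps, subset/quotient diffeologies and subductions (smooth surjections with pushforward diffeology on the target) are as usual. A diffeological vector pseudo-bundle $\pi:V\to X$ is a smooth surjection with vector space fibres whose fibrewise addition, scalar multiplication and zero section are smooth. A gluing $(\tilde f,f)$: $f:Y\to X_2$ smooth on $Y\subseteq X_1$, $\tilde f:\pi_1^{-1}(Y)\to V_2$ smooth, $\pi_2\circ\tilde f=f\circ\pi_1$, linear on fibres. $s_1,s_2$ are $(f,\tilde f)$-compatible if $\tilde f(s_1(y))=s_2(f(y))$ for all $y\in Y$ (then $s_1$ is $(f,\tilde f)$-invariant: $\tilde f(s_1(y))=\tilde f(s_1(y'))$ whenever $f(y)=f(y')$). $X_1^f$ is the quotient of $X_1$ identifying $y,y'\in Y$ with $f(y)=f(y')$, $V_1^{\tilde f}$ the quotient of $V_1$ identifying $v,v'\in\pi_1^{-1}(Y)$ with $\tilde f(v)=\tilde f(v')$ (quotient diffeologies, projections $\chi_1^f,\chi_1^{\tilde f}$); $f,\tilde f$ induce $f_\sim:\chi_1^f(Y)\to X_2$ and $\tilde f_\sim:\chi_1^{\tilde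 f}(\pi_1^{-1}(Y))\to V_2$ with $f_\sim\circ\chi_1^f=f$, $\tilde f_\sim\circ\chi_1^{\tilde f}=\tilde f$. For an $(f,\tilde f)$-invariant $s_1$, $\mathcal{S}_1(s_1)$ is the unique smooth section of $V_1^{\tilde f}\to X_1^f$ with $\mathcal{S}_1(s_1)\circ\chi_1^f=\chi_1^{\tilde f}\circ s_1$. A section $\sigma$ of $V_1^{\tilde f}$ and $s_2$ are $(f_\sim,\tilde f_\sim)$-compatible if $\tilde f_\sim(\sigma(z))=s_2(f_\sim(z))$ for all $z\in\chi_1^f(Y)$. *)

(* Defs.v *)
From HB Require Import structures.
From mathcomp Require Import all_boot all_order all_algebra.
From mathcomp Require Import all_classical all_reals all_analysis.
Unset Printing Implicit Defensive.
Import Order.TTheory GRing.Theory Num.Theory.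
Import numFieldNormedType.Exports.
Local Open Scope classical_set_scope.
Local Open Scope ring_scope.

Definition elt {T : Type} (A : set T) := {x : T | A x}.

Definition restr {T : Type} {U W : set T} (HWU : W `<=` U) : elt W -> elt U :=
  fun w => exist _ (proj1_sig w) (HWU _ (proj2_sig w)).

Definition pre {V X : Type} (pi : V -> X) (Y : set X) : set V := fun v => Y (pi v).

Definition imset {T U : Type} (g : T -> U) : set U := fun y => exists x, g x = y.
Definition corestr {T U : Type} (g : T -> U) : T -> elt (imset g) :=
  fun x => exist (imset g) (g x) (ex_intro _ x erefl).

Section Diffeology.
Context {R : realType}.

Fixpoint iderive {V W : normedModType R} (vs : seq V) (f : V -> W) : V -> W :=
  match vs with
  | [::] => f
  | v :: vs' => fun x => derive (iderive vs' f) x v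
  end.

Definition smooth_on {V W : normedModType R} (U : set V) (f : V -> W) :=
  forall (vs : seq V) (x : V), U x ->
    (forall v, derivable (iderive vs f) x v) /\ {for x, continuous (iderive vs f)}.

Definition dsmooth {m n : nat} (W : set 'rV[R]_m) (U : set 'rV[R]_n)
  (h : elt W -> elt U) :=
  exists H : 'rV[R]_m -> 'rV[R]_n,
    (forall w, H (proj1_sig w) = proj1_sig (h w)) /\ smooth_on W H.

Definition plots (X : Type) := forall n (U : set 'rV[R]_n), (elt U -> X) -> Prop.

Definition is_diffeology (X : Type) (P : plots X) :=
  [/\ (forall n U p, P n U p -> open U),
      (forall n U (c : X), open U -> P n U (fun _ => c)),
      (forall n U p, open U ->
         (forall u : elt U, exists W (HWU : W `<=` U),
            [/\ open W, W (proj1_sig u) & P n W (p \o restr HWU)]) ->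
         P n U p) &
      (forall n m (U : set 'rV[R]_n) (W : set 'rV[R]_m) p (h : elt W -> elt U),
         P n U p -> open W -> dsmooth W U h -> P m W (p \o h))].

Record dspace := DSpace { dcar :> Type; dplot : plots dcar }.

Definition is_dspace (X : dspace) := is_diffeology X (dplot X).

Definition smooth {X Y : dspace} (g : X -> Y) :=
  forall n U p, dplot X n U p -> dplot Y n U (g \o p).

Definition sub_plots {X : dspace} (A : set X) : plots (elt A) :=
  fun n U p => dplot X n U (@proj1_sig _ _ \o p).
Definition subspace (X : dspace) (A : set X) : dspace := DSpace (elt A) (sub_plots A).

(* quotients: the type of classes of a relation (an equivalence in all uses) *)
Definition quot {T : Type} (r : T -> T -> Prop) := {A : set T | exists x, A = r x}.
Definition qproj {T : Type} (r : T -> T -> Prop) (x : T) : quot r :=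
  exist (fun A => exists y, A = r y) (r x) (ex_intro _ x erefl).
Definition qrep {T : Type} {r : T -> T -> Prop} (z : quot r) : T :=
  projT1 (cid (proj2_sig z)).

Definition quot_plots {X : dspace} (r : X -> X -> Prop) : plots (quot r) :=
  fun n U p => open U /\
    forall u : elt U, exists W (HWU : W `<=` U),
      [/\ open W, W (proj1_sig u) &
        exists q : elt W -> X, dplot X n W q /\
          forall w, qproj r (q w) = p (restr HWU w)].
Definition quotient (X : dspace) (r : X -> X -> Prop) : dspace :=
  DSpace (quot r) (quot_plots r).

Definition subduction {X Y : dspace} (g : X -> Y) :=
  [/\ smooth g, (forall y, exists x, g x = y) &
      (forall n U p, dplot Y n U p -> forall u : elt U,
         exists W (HWU : W `<=` U),
         [/\ open W, W (proj1_sig u) &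
           exists q : elt W -> X, dplot X n W q /\
             forall w, g (q w) = p (restr HWU w)])].

Definition subduction_onto_image {X Y : dspace} (g : X -> Y) :=
  @subduction X (subspace Y (imset g)) (corestr g).

Definition R_plots : plots R := fun n U p =>
  open U /\ exists P : 'rV[R]_n -> R^o,
    (forall u, P (proj1_sig u) = p u) /\ smooth_on U P.

Record pbundle := PBundle {
  tot : dspace; base : dspace; pproj : tot -> base;
  vadd : tot -> tot -> tot; vscale : R -> tot -> tot; vzero : base -> tot }.

Definition is_pbundle (B : pbundle) :=
  let pi := pproj B in let add := vadd B in let sc := vscale B in
  let z := vzero B in
  [/\ is_dspace (tot B), is_dspace (base B),
      smooth pi /\ (forall x, exists v, pi v = x),
      [/\ (forall u v, pi u = pi v -> pi (add u v) = pi u),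
          (forall a u, pi (sc a u) = pi u),
          (forall x, pi (z x) = x),
       [/\ (forall u v, pi u = pi v -> add u v = add v u),
          (forall u v w, pi u = pi v -> pi v = pi w ->
             add (add u v) w = add u (add v w)),
          (forall u, add u (z (pi u)) = u) &
          (forall u, add u (sc (-1) u) = z (pi u))] &
       [/\ (forall a b u, sc a (sc b u) = sc (a * b) u),
          (forall u, sc 1 u = u),
          (forall a u v, pi u = pi v -> sc a (add u v) = add (sc a u) (sc a v)) &
          (forall a b u, sc (a + b) u = add (sc a u) (sc b u))]] &
      [/\ (forall n U p q, dplot (tot B) n U p -> dplot (tot B) n U q ->
             (forall u, pi (p u) = pi (q u)) ->
             dplot (tot B) n U (fun u => add (p u) (q u))),
          (forall n U a p, R_plots n U a -> dplot (tot B) n U p ->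
             dplot (tot B) n U (fun u => sc (a u) (p u))) &
          smooth z]].

Definition smooth_section {B : pbundle} (s : base B -> tot B) :=
  smooth s /\ forall x, pproj B (s x) = x.

Definition is_gluing {B1 B2 : pbundle} {Y : set (base B1)} (f : elt Y -> base B2)
  (ft : elt (pre (pproj B1) Y) -> tot B2) :=
  [/\ @smooth (subspace (base B1) Y) (base B2) f,
      @smooth (subspace (tot B1) (pre (pproj B1) Y)) (tot B2) ft,
      (forall v : elt (pre (pproj B1) Y),
         pproj B2 (ft v) = f (exist Y (pproj B1 (proj1_sig v)) (proj2_sig v))),
      (forall u v w : elt (pre (pproj B1) Y),
         pproj B1 (proj1_sig u) = pproj B1 (proj1_sig v) ->
         proj1_sig w = vadd B1 (proj1_sig u) (proj1_sig v) ->
         ft w = vadd B2 (ft u) (ft v)) &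
      (forall (a : R) (v w : elt (pre (pproj B1) Y)),
         proj1_sig w = vscale B1 a (proj1_sig v) ->
         ft w = vscale B2 a (ft v))].

End Diffeology.

Definition glue_rel {T U : Type} {A : set T} (g : elt A -> U) : T -> T -> Prop :=
  fun x x' => x = x' \/
    exists (hx : A x) (hx' : A x'), g (exist A x hx) = g (exist A x' hx').

Definition qimg {T : Type} (r : T -> T -> Prop) (A : set T) : set (quot r) :=
  fun z => exists y : elt A, qproj r (proj1_sig y) = z.

(* the map induced on the image of A by g : A -> U (g_~ o chi = g) *)
Definition induced {T U : Type} {A : set T} (g : elt A -> U) :
  elt (qimg (glue_rel g) A) -> U :=
  fun z => g (projT1 (cid (proj2_sig z))).

(* S(s): the section of the quotient induced by an invariant section s,
   characterised by S(s) o chi = chi~ o s *)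
Definition induced_section {T1 T2 : Type} (r1 : T1 -> T1 -> Prop)
  (r2 : T2 -> T2 -> Prop) (s : T1 -> T2) : quot r1 -> quot r2 :=
  fun z => qproj r2 (s (qrep z)).

Definition compatible {X1 V1 X2 V2 : Type} {A : set X1} {D : set V1}
  (g : elt A -> X2) (gt : elt D -> V2) (s1 : X1 -> V1) (s2 : X2 -> V2) :=
  forall y : elt A, exists v : elt D,
    proj1_sig v = s1 (proj1_sig y) /\ gt v = s2 (g y).

(* Main.v *)
Require Import Defs.
From mathcomp Require Import all_boot all_algebra all_classical all_reals.

Lemma elt_eq' {T : Type} (A : set T) (a b : elt A) :
  proj1_sig a = proj1_sig b -> a = b.
Proof.
case: a b => [x hx] [y hy] /= e; subst y; congr exist; apply: Prop_irrelevance.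
Qed.

Lemma glue_rel_val {T U : Type} {A : set T} {g : elt A -> U} {a b : T} :
  glue_rel g a = glue_rel g b -> glue_rel g a b.
Proof. by move=> ->; left. Qed.

Lemma glue_rel_g {T U : Type} {A : set T} {g : elt A -> U} {a : elt A} {b : T} :
  glue_rel g (proj1_sig a) b -> exists hb : A b, g a = g (exist A b hb).
Proof.
case=> [e|[ha [hb e]]].
  subst b; exists (proj2_sig a); congr g; exact: elt_eq'.
exists hb; rewrite -e; congr g; exact: elt_eq'.
Qed.

Theorem proposition2p26 (R : realType) (B1 B2 : @pbundle R)
  (Y : set (base B1)) (f : elt Y -> base B2)
  (ft : elt (pre (pproj B1) Y) -> tot B2)
  (s1 : base B1 -> tot B1) (s2 : base B2 -> tot B2) :
  is_pbundle B1 -> is_pbundle B2 ->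
  is_gluing f ft ->
  @subduction_onto_image R (subspace (base B1) Y) (base B2) f ->
  @subduction_onto_image R (subspace (tot B1) (pre (pproj B1) Y)) (tot B2) ft ->
  smooth_section s1 -> smooth_section s2 ->
  compatible f ft s1 s2 ->
  compatible (induced f) (induced ft)
    (induced_section (glue_rel f) (glue_rel ft) s1) s2.
Proof.
move=> _ _ _ _ _ [_ hs1] _ hc z.
rewrite /induced_section /qrep.
case: (cid (proj2_sig (proj1_sig z))) => x hx /=.
rewrite /induced.
case: (cid (proj2_sig z)) => y1 hy1 /=.
have e1 : glue_rel f (proj1_sig y1) = glue_rel f x.
  by rewrite -hx; move: hy1; rewrite /qproj => /(congr1 (@proj1_sig _ _)).
have [hxY efx] := glue_rel_g (glue_rel_val e1).
have hp : pre (pproj B1) Y (s1 x) by rewrite /pre hs1.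
exists (exist (qimg (glue_rel ft) (pre (pproj B1) Y)) (qproj (glue_rel ft) (s1 x))
          (ex_intro _ (exist _ (s1 x) hp) erefl)).
split=> //=.
case: (cid _) => w hw /=.
have e2 : glue_rel ft (proj1_sig (exist _ (s1 x) hp)) = glue_rel ft (proj1_sig w).
  exact: (esym (congr1 (@proj1_sig _ _) hw)).
have [hw' efw] := glue_rel_g (glue_rel_val e2).
have -> : w = exist _ (proj1_sig w) hw' by exact: elt_eq'.
rewrite -efw efx.
have [v [hv1 hv2]] := hc (exist Y x hxY).
rewrite -hv2; congr ft; exact: elt_eq'.
Qed.
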